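(* Let $H$ be a complex Hilbert space, let $R \in \mathcal{L}(H)$ be an isometry (i.e. $\|Rx\| = \|x\|$ for all $x\in H$), and let $T \in \mathcal{L}(H)$ satisfy the property $\mathcal{AN}^*$. Then $TR$ and $RT$ satisfy the property $\mathcal{AN}^*$.
   Context: $\mathcal{L}(H)$ is the space of bounded linear operators on $H$. For a closed subspace $M \neq \{0\}$ of $H$ and $T \in \mathcal{L}(H)$, write $[T|_M] := \inf\{\|Tx\| : x \in M, \|x\|=1\}$; $T|_M$ satisfies the property $\mathcal{N}^*$ if there exists $x_0 \in M$ with $\|x_0\| = 1$ and $\|Tx_0\| = [T|_M]$. $T$ satisfies the property $\mathcal{AN}^*$ if for every closed subspace $M \neq \{0\}$ of $H$, $T|_M$ satisfies $\mathcal{N}^*$. *)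

(* Defs.v *)
From mathcomp Require Import all_boot all_order all_algebra.
From mathcomp Require Import complex.
From mathcomp Require Import classical_sets reals.
Set Implicit Arguments. Unset Strict Implicit. Unset Printing Implicit Defensive.
Import Order.TTheory GRing.Theory Num.Theory.
Local Open Scope ring_scope.
Local Open Scope classical_set_scope.

Section Hilbert.
Variables (R : realType) (V : lmodType R[i]) (ip : V -> V -> R[i]).

Definition hnorm (x : V) : R := Num.sqrt (complex.Re (ip x x)).

Definition is_hilbert : Prop :=
  [/\ (forall (a : R[i]) (x y z : V), ip (a *: x + y) z = a * ip x z + ip y z),
      (forall x y : V, ip y x = (ip x y)^*%C),
      (forall x : V, 0 <= ip x x),
      (forall x : V, ip x x = 0 -> x = 0) &
      (forall u : nat -> V,
         (forall e : R, 0 < e -> exists N : nat, forall m n : nat,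
            (N <= m)%N -> (N <= n)%N -> hnorm (u m - u n) < e) ->
         exists l : V, forall e : R, 0 < e -> exists N : nat, forall n : nat,
            (N <= n)%N -> hnorm (u n - l) < e)].

Definition bounded_op (T : V -> V) : Prop :=
  (forall (a : R[i]) (x y : V), T (a *: x + y) = a *: T x + T y) /\
  (exists C : R, forall x : V, hnorm (T x) <= C * hnorm x).

Definition is_isometry (T : V -> V) : Prop := forall x : V, hnorm (T x) = hnorm x.

Definition closed_subspace (M : set V) : Prop :=
  [/\ M 0,
      (forall (a : R[i]) (x y : V), M x -> M y -> M (a *: x + y)) &
      (forall (u : nat -> V) (l : V), (forall n, M (u n)) ->
         (forall e : R, 0 < e -> exists N : nat, forall n : nat,
            (N <= n)%N -> hnorm (u n - l) < e) -> M l)].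

Definition restr_inf (T : V -> V) (M : set V) : R :=
  inf [set hnorm (T x) | x in [set x | M x /\ hnorm x = 1]].

Definition prop_Nstar (T : V -> V) (M : set V) : Prop :=
  exists x0 : V, [/\ M x0, hnorm x0 = 1 & hnorm (T x0) = restr_inf T M].

Definition prop_ANstar (T : V -> V) : Prop :=
  forall M : set V, closed_subspace M -> M <> [set 0] -> prop_Nstar T M.

End Hilbert.

(* Main.v *)
From mathcomp Require Import all_boot all_order all_algebra complex classical_sets reals boolp.
Require Import Defs.
From mathcomp Require Import ring lra.
Import Order.TTheory GRing.Theory Num.Theory.
Local Open Scope ring_scope.

Section H.
Variables (R : realType) (V : lmodType R[i]) (ip : V -> V -> R[i]).
Variable Hhil : is_hilbert ip.

Lemma ReD (a b : R[i]) : complex.Re (a + b) = complex.Re a + complex.Re b.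
Proof. by case: a; case: b. Qed.
Lemma ReN (a : R[i]) : complex.Re (- a) = - complex.Re a.
Proof. by case: a. Qed.

Lemma ipDl x y z : ip (x + y) z = ip x z + ip y z.
Proof. case: Hhil => H _ _ _ _. by rewrite -[x]scale1r H mul1r scale1r. Qed.
Lemma ip0l z : ip 0 z = 0.
Proof. have := ipDl 0 0 z; rewrite addr0 => /eqP; rewrite -subr_eq subrr eq_sym => /eqP //. Qed.
Lemma ipNl x z : ip (- x) z = - ip x z.
Proof. case: Hhil => H _ _ _ _. have := H (-1) x 0 z. by rewrite addr0 ip0l addr0 scaleN1r mulN1r. Qed.
Lemma ipDr x y z : ip z (x + y) = ip z x + ip z y.
Proof. case: Hhil => _ H _ _ _. by rewrite H ipDl rmorphD (H x z) (H y z). Qed.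
Lemma ipNr x z : ip z (- x) = - ip z x.
Proof. case: Hhil => _ H _ _ _. by rewrite H ipNl rmorphN (H x z). Qed.

Definition q x := complex.Re (ip x x).
Lemma q_ge0 x : 0 <= q x.
Proof. case: Hhil => _ _ H _ _. by have := H x; rewrite lecE => /andP[_]. Qed.

Lemma para x y : q (x + y) <= 2 * q x + 2 * q y.
Proof.
have E : ip (x + y) (x + y) + ip (x - y) (x - y) = ip x x + ip x x + ip y y + ip y y.
  rewrite !ipDl !ipDr !ipNl !ipNr opprK. ring.
have H2 : q (x + y) + q (x - y) = q x + q x + q y + q y.
  by rewrite /q -ReD E !ReD.
have := q_ge0 (x - y). lra.
Qed.
Lemma hnormE x : hnorm ip x = Num.sqrt (q x). Proof. by []. Qed.
Lemma hnorm_ge0 x : 0 <= hnorm ip x. Proof. exact: sqrtr_ge0. Qed.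
Lemma hnormN x : hnorm ip (- x) = hnorm ip x.
Proof. by rewrite !hnormE /q ipNl ipNr opprK. Qed.
Lemma hnorm_lt x e : 0 < e -> (hnorm ip x < e) = (q x < e ^+ 2).
Proof.
move=> e0; rewrite hnormE -{1}(ger0_norm (ltW e0)) -sqrtr_sqr ltr_sqrt //.
by rewrite exprn_gt0.
Qed.
Lemma hnorm_eq0 x : hnorm ip x = 0 -> x = 0.
Proof.
move=> /eqP; rewrite hnormE sqrtr_eq0 => h.
have q0 : q x = 0 by apply/le_anti; rewrite h q_ge0.
case: Hhil => _ _ Hp Hd _; apply: Hd.
move: (Hp x) q0; rewrite lecE /q; case: (ip x x) => a b /= /andP[/eqP -> _] ->.
by [].
Qed.
Lemma hnorm_add a b d : 0 < d -> hnorm ip a < d -> hnorm ip b < d -> hnorm ip (a + b) < 2 * d.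
Proof.
move=> d0; rewrite !hnorm_lt ?mulr_gt0 // => ha hb.
have := para a b. have := q_ge0 a. have := q_ge0 b. rewrite exprMn. nra.
Qed.
Lemma hnorm0 : hnorm ip 0 = 0.
Proof. by rewrite hnormE /q ip0l /= sqrtr0. Qed.
Lemma hnorm_small x : (forall e, 0 < e -> hnorm ip x < e) -> x = 0.
Proof.
move=> h; apply: hnorm_eq0; apply/eqP; rewrite eq_le hnorm_ge0 andbT.
rewrite leNgt; apply/negP => p. by have := h _ p; rewrite ltxx.
Qed.
End H.

Arguments q {R V} ip x.
Arguments ipDl {R V ip} Hhil x y z.
Arguments hnormN {R V ip} Hhil x.
Arguments hnorm_eq0 {R V ip} Hhil x.
Arguments hnorm_add {R V ip} Hhil a b d.
Arguments hnorm_small {R V ip} Hhil x.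
Arguments hnorm0 {R V ip} Hhil.
Arguments hnorm_ge0 {R V} ip x.

Theorem proposition3p3 (R : realType) (V : lmodType R[i]) (ip : V -> V -> R[i])
    (Hhil : is_hilbert ip) (Rop T : V -> V)
    (HR : bounded_op ip Rop) (HRiso : is_isometry ip Rop)
    (HT : bounded_op ip T) (HTan : prop_ANstar ip T) :
  prop_ANstar ip (T \o Rop) /\ prop_ANstar ip (Rop \o T).
Proof.
have [Hlin _] := HR.
have RopD x y : Rop (x + y) = Rop x + Rop y by move: (Hlin 1 x y); rewrite !scale1r.
have Rop0 : Rop 0 = 0.
  by have := RopD 0 0; rewrite addr0 => /eqP; rewrite -subr_eq subrr eq_sym => /eqP.
have RopB x y : Rop (x - y) = Rop x - Rop y.
  by rewrite addrC -scaleN1r Hlin scaleN1r addrC.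
split; last first.
  move=> M HM HM0; have [x0 [Mx0 h1 h2]] := HTan M HM HM0.
  exists x0; split => //=; rewrite HRiso h2 /restr_inf.
  congr (inf (image _ _)); apply: funext => x /=; by rewrite HRiso.
move=> M [M0 Mlin Mcl] HM0.
pose N : set V := fun y => exists x, M x /\ y = Rop x.
have NE : forall x, M x -> N (Rop x) by move=> x Mx; exists x.
have HN : closed_subspace ip N.
  split; first by exists 0; rewrite Rop0.
  - move=> a _ _ [x [Mx ->]] [y [My ->]]; exists (a *: x + y); split; first exact: Mlin.
    by rewrite Hlin.
  - move=> u l Nu cvg.
    have /choice [w Hw] : forall n, exists x, M x /\ u n = Rop x by [].
    have Cw : forall e : R, 0 < e -> exists N0 : nat, forall m n : nat,
        (N0 <= m)%N -> (N0 <= n)%N -> hnorm ip (w m - w n) < e.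
      move=> e e0; have [N0 HN0] := cvg (e / 2) (divr_gt0 e0 (ltr0Sn _ 1)).
      exists N0 => m n hm hn.
      rewrite -HRiso RopB -(proj2 (Hw m)) -(proj2 (Hw n)).
      have -> : u m - u n = (u m - l) + - (u n - l) by rewrite opprB addrA subrK.
      rewrite (_ : e = 2 * (e / 2)); last lra; apply: (hnorm_add Hhil); first by rewrite divr_gt0.
        exact: HN0.
      by rewrite (hnormN Hhil); apply: HN0.
    have [_ _ _ _ Hcomp] := Hhil.
    have [l' Hl'] := Hcomp w Cw.
    have Ml' : M l' by apply: (Mcl w l') => // n; exact: (proj1 (Hw n)).
    have -> : l = Rop l'.
      apply/eqP; rewrite -subr_eq0; apply/eqP; apply: (hnorm_small Hhil) => e e0.
      have e20 : 0 < e / 2 by rewrite divr_gt0.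
      have [N1 H1] := cvg _ e20; have [N2 H2] := Hl' _ e20.
      have -> : l - Rop l' = - (u (maxn N1 N2) - l) + (u (maxn N1 N2) - Rop l') by rewrite opprB addrA subrK.
      rewrite (_ : e = 2 * (e / 2)); last lra; apply: (hnorm_add Hhil) => //.
        by rewrite (hnormN Hhil); apply: H1; rewrite leq_maxl.
      by rewrite (proj2 (Hw _)) -RopB HRiso; apply: H2; rewrite leq_maxr.
    exact: NE.
have HN0 : N <> [set 0]%classic.
  move=> HN0; apply: HM0; apply/seteqP; split => x /=; last by move=> ->.
  move=> Mx; have : N (Rop x) := NE x Mx.
  rewrite HN0 /= => Rx0.
  by apply: (hnorm_eq0 Hhil); rewrite -HRiso Rx0 (hnorm0 Hhil).
have [y0 [[x0 [Mx0 ->]] h1 h2]] := HTan N HN HN0.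
exists x0; split => //; first by rewrite -HRiso.
rewrite /= h2 /restr_inf; congr inf; apply/seteqP; split => r /=.
  by move=> [_ [[x [Mx ->]] hx] <-]; exists x => //; split => //; rewrite -HRiso.
by move=> [x [Mx hx] <-]; exists (Rop x) => //; split; [exact: NE | rewrite HRiso].
Qed.
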